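(* Let $M \le N$, let $F:\mathbb{R}^M\to\mathbb{R}^M$ be a differentiable latent map, and let $G:\mathbb{R}^M\to\mathbb{R}^N$, $G(\bm z)=\bm B\bm z$, be a linear observation model with $\bm B\in\mathbb{R}^{N\times M}$ of full rank. Let $\bm J(\bm z)=\partial F(\bm z)/\partial \bm z$ and suppose $$\tilde\sigma_{\max}:=\sup\{\|\bm J(\bm z)\|_2=\sigma_{\max}(\bm J(\bm z)) : \bm z\in\mathbb{R}^M\}$$ satisfies $1<\tilde\sigma_{\max}<\infty$. Choose the forcing strength $\alpha\in(\alpha^*,1]$, where $\alpha^*:=1-\tilde\sigma_{\max}^{-1}$, and set $$\rho:=(1-\alpha)\,\tilde\sigma_{\max}.$$ Then $\rho<1$, and the forced system $F\circ\delta_{\alpha,\bm B}$ is globally contracting with rate $\rho$: for every teacher sequence $(\bm x_t)_{t\ge 0}$ in $\mathbb{R}^N$, every $t$ and every $\bm z\in\mathbb{R}^M$, the Jacobian of the forced map $\bm z\mapsto F(\delta_{\alpha,\bm B}(\bm z,\bm x_t))$ has spectral norm at most $\rho$. Moreover, the largest Lyapunov exponent of the forced system (along any orbit) satisfies $$\lambda_{\mathrm{GTF}}\le \log\rho<0.$$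
   Context: Generalized teacher forcing: for a forcing strength $\alpha\in[0,1]$ and observation matrix $\bm B$ with Moore–Penrose pseudo-inverse $\bm B^+$, define $\delta_{\alpha,\bm B}(\bm z,\bm x)=(\bm I-\alpha\bm B^+\bm B)\bm z+\alpha\bm B^+\bm x$. The forced system is the (non-autonomous) recursion $\bm z_t=F(\delta_{\alpha,\bm B}(\bm z_{t-1},\bm x_{t-1}))$ driven by a given data (teacher) sequence $\bm x_t\in\mathbb{R}^N$. For an iterated (possibly time-dependent) map with Jacobians $\bm J_t$ evaluated along the orbit starting at $\bm z_0$, the largest Lyapunov exponent is $\lambda(\bm z_0)=\lim_{T\to\infty}\frac1T\log\|\bm J_T\bm J_{T-1}\cdots\bm J_1\|_2$; the map is called contracting at $\bm z_0$ if $\lambda(\bm z_0)<0$ and divergent if $\lambda(\bm z_0)>0$. $\lambda_{\mathrm{GTF}}$ denotes this exponent for the forced system, with $\bm J_t$ the Jacobian of $\bm z\mapsto F(\delta_{\alpha,\bm B}(\bm z,\bm x_{t-1}))$ at $\bm z_{t-1}$. *)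

(* Defs.v *)
From HB Require Import structures.
From mathcomp Require Import all_boot all_order all_algebra.
From mathcomp Require Import all_classical all_reals all_analysis.
Set Implicit Arguments. Unset Strict Implicit. Unset Printing Implicit Defensive.
Import Order.TTheory GRing.Theory Num.Theory.
Import numFieldNormedType.Exports.
Local Open Scope classical_set_scope.
Local Open Scope ring_scope.

Definition enorm (R : realType) (n : nat) (v : 'cV[R]_n) : R :=
  Num.sqrt (\sum_(i < n) (v i 0) ^+ 2).

Definition spec_norm (R : realType) (m n : nat) (A : 'M[R]_(m, n)) : R :=
  sup [set enorm (A *m v) | v in [set v : 'cV[R]_n | enorm v <= 1]].

Definition is_MP_pinv (R : realType) (m n : nat)
    (A : 'M[R]_(m, n)) (X : 'M[R]_(n, m)) : Prop :=
  [/\ A *m X *m A = A, X *m A *m X = X,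
      (A *m X)^T = A *m X & (X *m A)^T = X *m A].

(* Jacobian matrix (column convention): column j is dF(z) e_j. *)
Definition jac (R : realType) (m n : nat) (F : 'cV[R]_m -> 'cV[R]_n)
    (z : 'cV[R]_m) : 'M[R]_(n, m) :=
  \matrix_(i < n, j < m) ('d F z (delta_mx j (0 : 'I_1))) i 0.

Definition gtf_delta (R : realType) (M N : nat) (alpha : R)
    (B : 'M[R]_(N, M)) (Bp : 'M[R]_(M, N)) (z : 'cV[R]_M) (x : 'cV[R]_N)
    : 'cV[R]_M :=
  (1%:M - alpha *: (Bp *m B)) *m z + alpha *: (Bp *m x).

Definition forced_map (R : realType) (M N : nat) (F : 'cV[R]_M -> 'cV[R]_M)
    (alpha : R) (B : 'M[R]_(N, M)) (Bp : 'M[R]_(M, N))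
    (x : nat -> 'cV[R]_N) (t : nat) : 'cV[R]_M -> 'cV[R]_M :=
  fun z => F (gtf_delta alpha B Bp z (x t)).

Fixpoint forced_orbit (R : realType) (M N : nat) (F : 'cV[R]_M -> 'cV[R]_M)
    (alpha : R) (B : 'M[R]_(N, M)) (Bp : 'M[R]_(M, N))
    (x : nat -> 'cV[R]_N) (z0 : 'cV[R]_M) (t : nat) : 'cV[R]_M :=
  match t with
  | 0 => z0
  | t'.+1 => forced_map F alpha B Bp x t' (forced_orbit F alpha B Bp x z0 t')
  end.

(* Product J_T J_{T-1} ... J_1 with J_t = Jacobian of the forced map at time
   t-1 evaluated at z_{t-1}; the empty product (T = 0) is the identity. *)
Fixpoint forced_jac_prod (R : realType) (M N : nat) (F : 'cV[R]_M -> 'cV[R]_M)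
    (alpha : R) (B : 'M[R]_(N, M)) (Bp : 'M[R]_(M, N))
    (x : nat -> 'cV[R]_N) (z0 : 'cV[R]_M) (T : nat) : 'M[R]_M :=
  match T with
  | 0 => 1%:M
  | T'.+1 => jac (forced_map F alpha B Bp x T') (forced_orbit F alpha B Bp x z0 T')
             *m forced_jac_prod F alpha B Bp x z0 T'
  end.

(* Extended-real logarithm: log 0 = -oo (norms are nonnegative). *)
Definition elog (R : realType) (r : R) : \bar R :=
  if 0 < r then (ln r)%:E else -oo%E.

(* Largest Lyapunov exponent along the orbit from z0, as the upper limit
   limsup_T (1/T) log ||J_T ... J_1||_2 (equals the limit when it exists). *)
Definition lyap_gtf (R : realType) (M N : nat) (F : 'cV[R]_M -> 'cV[R]_M)
    (alpha : R) (B : 'M[R]_(N, M)) (Bp : 'M[R]_(M, N))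
    (x : nat -> 'cV[R]_N) (z0 : 'cV[R]_M) : \bar R :=
  limn_esup (fun T : nat =>
    ((T%:R)^-1)%:E * elog (spec_norm (forced_jac_prod F alpha B Bp x z0 T)))%E.

(* Main.v *)
Require Import Defs.
From HB Require Import structures.
From mathcomp Require Import all_boot all_order all_algebra.
From mathcomp Require Import all_classical all_reals all_analysis.
Import Order.TTheory GRing.Theory Num.Theory.
Import numFieldNormedType.Exports.
Local Open Scope classical_set_scope.
Local Open Scope ring_scope.

Section SN.
Context {R : realType}.

Lemma enorm_ge0 {n} (v : 'cV[R]_n) : 0 <= enorm v.
Proof. exact: sqrtr_ge0. Qed.

Lemma enormZ {n} (a : R) (v : 'cV[R]_n) : enorm (a *: v) = `|a| * enorm v.
Proof.
rewrite /enorm (eq_bigr (fun i => a ^+ 2 * (v i 0) ^+ 2)); last first.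
  by move=> i _; rewrite mxE exprMn.
rewrite -mulr_sumr sqrtrM ?sqr_ge0 // sqrtr_sqr //.
Qed.

Lemma coord_le_enorm {n} (v : 'cV[R]_n) i : `|v i 0| <= enorm v.
Proof.
rewrite /enorm -(sqrtr_sqr (v i 0)) ler_sqrt; last first.
  by apply: sumr_ge0 => j _; rewrite sqr_ge0.
by rewrite (bigD1 i) //= lerDl; apply: sumr_ge0 => j _; rewrite sqr_ge0.
Qed.

Definition SNset {m n} (A : 'M[R]_(m, n)) :=
  [set enorm (A *m v) | v in [set v : 'cV[R]_n | enorm v <= 1]].

Lemma SNset_ub {m n} (A : 'M[R]_(m, n)) : has_ubound (SNset A).
Proof.
exists (Num.sqrt (\sum_(i < m) (\sum_(j < n) `|A i j|) ^+ 2)).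
move=> _ [v /= hv <-]; rewrite /enorm ler_sqrt; last first.
  by apply: sumr_ge0 => j _; rewrite sqr_ge0.
apply: ler_sum => i _; rewrite -[X in X <= _]real_normK ?num_real //.
apply: lerXn2r; rewrite ?nnegrE ?normr_ge0 ?sumr_ge0 //.
rewrite mxE; apply: le_trans (ler_norm_sum _ _ _) _.
apply: ler_sum => j _; rewrite normrM.
rewrite -[X in _ <= X]mulr1 ler_wpM2l //.
exact: le_trans (coord_le_enorm _ _) hv.
Qed.

Lemma SNset0 {m n} (A : 'M[R]_(m, n)) : SNset A 0.
Proof.
exists 0; rewrite /= ?mulmx0 /enorm.
  by rewrite big1 ?sqrtr0 // => i _; rewrite mxE expr0n.
by rewrite big1 ?sqrtr0 // => i _; rewrite mxE expr0n.
Qed.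

Lemma spec_norm_ge0 {m n} (A : 'M[R]_(m, n)) : 0 <= spec_norm A.
Proof. exact: (ub_le_sup (SNset_ub A) (SNset0 A)). Qed.

Lemma enorm0 {n} : enorm (0 : 'cV[R]_n) = 0.
Proof. by rewrite /enorm big1 ?sqrtr0 // => i _; rewrite mxE expr0n. Qed.

Lemma spec_norm_ub {m n} (A : 'M[R]_(m, n)) v : enorm (A *m v) <= spec_norm A * enorm v.
Proof.
have [e0|v0] := eqVneq (enorm v) 0.
  have -> : v = 0.
    apply/matrixP => i j; rewrite (ord1 j) mxE; apply/eqP; rewrite -normr_le0.
    by rewrite -e0 coord_le_enorm.
  by rewrite mulmx0 !enorm0 mulr0.
have vp : 0 < enorm v by rewrite lt_def v0 enorm_ge0.
have h : SNset A (enorm (A *m ((enorm v)^-1 *: v))).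
  exists ((enorm v)^-1 *: v) => //=.
  by rewrite enormZ ger0_norm ?invr_ge0 ?enorm_ge0 // mulVf.
have := ub_le_sup (SNset_ub A) h.
rewrite -scalemxAr enormZ ger0_norm ?invr_ge0 ?enorm_ge0 //.
by rewrite ler_pdivrMl // mulrC.
Qed.

Lemma spec_norm_le {m n} (A : 'M[R]_(m, n)) c : 0 <= c ->
  (forall v, enorm (A *m v) <= c * enorm v) -> spec_norm A <= c.
Proof.
move=> c0 h; apply: ge_sup; first by exists 0; exact: SNset0.
move=> _ [v /= hv <-]; apply: le_trans (h v) _.
by rewrite -[X in _ <= X]mulr1 ler_wpM2l.
Qed.

Lemma spec_normM {m n p} (A : 'M[R]_(m, n)) (B : 'M[R]_(n, p)) :
  spec_norm (A *m B) <= spec_norm A * spec_norm B.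
Proof.
apply: spec_norm_le; first by rewrite mulr_ge0 // spec_norm_ge0.
move=> v; rewrite -mulmxA; apply: le_trans (spec_norm_ub _ _) _.
by rewrite -mulrA ler_wpM2l ?spec_norm_ge0 // spec_norm_ub.
Qed.

Lemma spec_normZ {m n} (A : 'M[R]_(m, n)) c : 0 <= c ->
  spec_norm (c *: A) <= c * spec_norm A.
Proof.
move=> c0; apply: spec_norm_le; first by rewrite mulr_ge0 // spec_norm_ge0.
move=> v; rewrite -scalemxAl enormZ ger0_norm // -mulrA ler_wpM2l //.
exact: spec_norm_ub.
Qed.

End SN.
Lemma pinv_left (R : realType) (M N : nat) (B : 'M[R]_(N, M)) Bp :
  \rank B = M -> is_MP_pinv B Bp -> Bp *m B = 1%:M.
Proof.
move=> rB [h1 _ _ _].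
have : row_full B by rewrite /row_full rB.
case/row_fullP => C hC.
rewrite -[Bp *m B]mul1mx -hC -!mulmxA (mulmxA B Bp B) h1.
by [].
Qed.

Opaque diff.
Lemma jac_forced (R : realType) (M N : nat) (F : 'cV[R]_M -> 'cV[R]_M)
  (B : 'M[R]_(N, M)) Bp alpha x t z :
  (forall z, differentiable F z) -> Bp *m B = 1%:M ->
  jac (forced_map F alpha B Bp x t) z =
  (1 - alpha) *: jac F ((1 - alpha) *: z + alpha *: (Bp *m x t)).
Proof.
move=> dF hB.
set c := 1 - alpha; set d := alpha *: (Bp *m x t).
pose g := ( *:%R c : 'cV[R]_M -> 'cV[R]_M) + cst d.
have eF : forced_map F alpha B Bp x t = F \o g.
  apply/funext => w; rewrite /forced_map /gtf_delta /g /= hB.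
  by rewrite scalemx1 -(raddfB (@scalar_mx _ M)) mul_scalar_mx.
have gz : g z = c *: z + d by [].
have dg : is_diff z g ( *:%R c + 0) by exact: is_diffD.
have dFg : is_diff (g z) F ('d F (g z)) by exact: differentiableP.
have hd := @diff_comp R _ _ _ g F z (@ex_diff _ _ _ _ _ _ _ dg) (dF (g z)).
case: dg => _ hg.
rewrite -gz.
clearbody g c d.
have key1 : 'd (forced_map F alpha B Bp x t) z = 'd (F \o g) z by rewrite eF.
have key3 v : 'd (F \o g) z v = 'd F (g z) ('d g z v) by exact: (congr1 (fun f => f v) hd).
have key4 v : 'd g z v = (( *:%R c : 'cV[R]_M -> 'cV[R]_M) + 0) v by exact: (congr1 (fun f => f v) hg).
have key5 v : (( *:%R c : 'cV[R]_M -> 'cV[R]_M) + 0) v = c *: v.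
  rewrite addrfctE. rewrite /=. rewrite addr0. reflexivity.
have key6 v : 'd (forced_map F alpha B Bp x t) z v = c *: 'd F (g z) v.
  rewrite key1.
  apply: etrans (key3 v) _.
  have e : 'd g z v = c *: v := etrans (key4 v) (key5 v).
  apply: etrans (f_equal ('d F (g z)) e) _.
  exact: linearZ.
apply/matrixP => i j.
rewrite [LHS]mxE.
apply: etrans (f_equal (fun A : 'cV[R]_M => A i 0) (key6 _)) _.
rewrite [LHS]mxE.
rewrite [RHS]mxE.
rewrite [X in _ = _ * X]mxE.
reflexivity.
Qed.
Lemma limn_esup_le_ev (R : realType) (u : (\bar R)^nat) l :
  (forall n, (1 <= n)%N -> (u n <= l)%E) -> (limn_esup u <= l)%E.
Proof.
move=> h; rewrite limn_esup_lim; apply: lime_le; first exact: is_cvg_esups.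
near=> m; apply: ub_ereal_sup => _ [k /= mk <-]; apply: h.
apply: leq_trans mk; near: m; exists 1%N => //.
Unshelve. all: by end_near. Qed.

Lemma term_le (R : realType) (T : nat) (y rho : R) : (1 <= T)%N ->
  0 <= y -> 0 <= rho -> y <= rho ^+ T ->
  ((T%:R)^-1%:E * elog y <= elog rho)%E.
Proof.
move=> T1 y0 r0 yr.
have Tp : (0 : R) < (T%:R)^-1 by rewrite invr_gt0 ltr0n.
rewrite /elog; case: ifPn => yp; last first.
  by rewrite muleC gt0_mulNye ?lte_fin // leNye.
have rp : 0 < rho.
  rewrite lt_def r0 andbT; apply/negP => /eqP r00.
  by move: yr; rewrite r00 expr0n; case: T T1 Tp => // T _ _; rewrite leNgt yp.
rewrite rp -EFinM lee_fin ler_pdivrMl ?ltr0n //.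
by rewrite mulr_natl -lnXn // ler_ln ?posrE ?exprn_gt0.
Qed.

Theorem proposition1 (R : realType) (M N : nat) (leMN : (M <= N)%N)
  (F : 'cV[R]_M -> 'cV[R]_M) (B : 'M[R]_(N, M)) (Bp : 'M[R]_(M, N))
  (alpha : R) :
  (forall z, differentiable F z) ->
  \rank B = M ->
  is_MP_pinv B Bp ->
  has_ubound (range (fun z => spec_norm (jac F z))) ->
  1 < sup (range (fun z => spec_norm (jac F z))) ->
  1 - (sup (range (fun z => spec_norm (jac F z))))^-1 < alpha ->
  alpha <= 1 ->
  let rho := (1 - alpha) * sup (range (fun z => spec_norm (jac F z))) in
  [/\ rho < 1,
      (forall (x : nat -> 'cV[R]_N) (t : nat) (z : 'cV[R]_M),
          spec_norm (jac (forced_map F alpha B Bp x t) z) <= rho),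
      (forall (x : nat -> 'cV[R]_N) (z0 : 'cV[R]_M),
          (lyap_gtf F alpha B Bp x z0 <= elog rho)%E)
    & (elog rho < 0)%E].
Proof.
move=> dF rB hMP hub.
set s := sup _ => s1 halpha a1 rho.
have s0 : 0 < s by apply: lt_trans s1.
have c0 : 0 <= 1 - alpha by rewrite subr_ge0.
have r0 : 0 <= rho by rewrite /rho mulr_ge0 // ltW.
have r1 : rho < 1.
  rewrite /rho -ltr_pdivlMr // mul1r; move: halpha; rewrite ltrBlDr addrC -ltrBlDr.
  by [].
have hB := @pinv_left _ _ _ B Bp rB hMP.
have Sz z : spec_norm (jac F z) <= s by apply: (ub_le_sup hub); exists z.
have part2 : forall (x : nat -> 'cV[R]_N) (t : nat) (z : 'cV[R]_M),
    spec_norm (jac (forced_map F alpha B Bp x t) z) <= rho.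
  move=> x t z; rewrite jac_forced //.
  apply: (le_trans (spec_normZ _ _ c0)).
  rewrite /rho ler_wpM2l //.
split => //.
- move=> x z0; apply: limn_esup_le_ev => T T1; apply: term_le => //.
    exact: spec_norm_ge0.
  elim: (T) => [|n IH] /=.
    apply: spec_norm_le => // v; by rewrite mul1mx mul1r.
  apply: le_trans (spec_normM _ _) _; rewrite exprS.
  by apply: ler_pM => //; apply: spec_norm_ge0.
- rewrite /elog; case: ifPn => // rp; rewrite lte_fin ln_lt0 //.
  by rewrite rp r1.
Qed.
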